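(* For each integer $t\geq 1$ let $a_t\geq 1$ be an integer, and let $$f_t(X)=X^3+a_t^2(a_t^3-2)X^2-a_t(a_t^3-1)X+1+tX(a_tX-1).$$ Let $\theta_t^{(1)}<\theta_t^{(2)}$ denote the two positive real roots of $f_t(X)$. Fix a real number $0<\alpha<1/4$ and suppose $a_t\leq t^{\alpha}$ for all $t\geq 1$. Then for every positive integer $k\leq 1/\alpha-3$ there is $A'=A'(\alpha,k)>0$ such that $$|\theta_t^{(1)}|\leq a_t^{-k}\quad\text{and}\quad |\theta_t^{(2)}-a_t^{-1}|\leq a_t^{-k}$$ for all $t$ with $a_t\geq A'$.
   Context: For integers $t\geq 1$ and $a_t\geq 1$, the polynomial $f_t(X)$ has only real roots, exactly two of which are positive (the third is negative); $\theta_t^{(1)}<\theta_t^{(2)}$ denote these two positive roots. *)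

(* Defs.v *)
From Stdlib Require Import Reals Lra Lia.
Open Scope R_scope.

Definition f_poly (t a x : R) : R :=
  x ^ 3 + a ^ 2 * (a ^ 3 - 2) * x ^ 2 - a * (a ^ 3 - 1) * x + 1
  + t * x * (a * x - 1).

(* Main.v *)
Require Import Defs.
From Stdlib Require Import Reals Lra Psatz.
Open Scope R_scope.


Definition g (a B x : R) := x^3 + a*(B-a)*x^2 - B*x + 1.

Lemma L1 a B x : 3 <= a -> 9*a <= B -> 1 <= a*x -> 0 < g a B x.
Proof.
  intros Ha HB Hx. unfold g.
  assert (Hx0 : 0 < x) by nra.
  assert (H1 : 1 <= (B-a)*x) by nra.
  replace (x^3 + a*(B-a)*x^2 - B*x + 1) with (x^3 + (a*x-1)*((B-a)*x-1)) by ring.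
  assert (0 <= (a*x-1)*((B-a)*x-1)) by nra. nra.
Qed.

Lemma L2 a B x : 3 <= a -> 0 < x -> 3 <= B*x -> 2*a*x <= 1 -> g a B x < 0.
Proof.
  intros Ha Hx HB Hax. unfold g.
  replace (x^3 + a*(B-a)*x^2 - B*x + 1) with (1 - (B*x)*(1-a*x) - a^2*x^2 + x^3) by ring.
  assert (x <= 1) by nra.
  assert (x^3 <= a^2*x^2).
  { replace (x^3) with (x*x^2) by ring.
    apply Rmult_le_compat_r; [apply pow2_ge_0|]. simpl; nra. }
  assert (3/2 <= (B*x)*(1-a*x)) by nra. lra.
Qed.

Lemma L3 a B x : 3 <= a -> 9*a <= B -> 1 <= 2*a*x -> 4 <= a^2*B*(1-a*x) -> g a B x < 0.
Proof.
  intros Ha HB Hx HE. unfold g.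
  replace (x^3 + a*(B-a)*x^2 - B*x + 1) with ((1-a*x)*(1+a*x-B*x) + x^3) by ring.
  assert (Hx0 : 0 < x) by nra.
  assert (Hax : a*x <= 1).
  { assert (0 <= a^2*B) by (simpl; nra). nra. }
  assert (H2 : 2*a*(1+a*x-B*x) <= 4*a - B) by nra.
  assert (Hpos : 0 < a^3*B) by (apply Rmult_lt_0_compat; [apply pow_lt; lra | lra]).
  assert (Hx3 : (a*x)^3 <= 1).
  { replace 1 with (1^3) by ring. apply pow_incr. nra. }
  assert (Hk : a^3*B*((1-a*x)*(1+a*x-B*x) + x^3) < 0).
  { replace (a^3*B*((1-a*x)*(1+a*x-B*x) + x^3)) with
      ((a^2*B*(1-a*x))*(a*(1+a*x-B*x)) + B*(a*x)^3) by ring.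
    assert (a*(1+a*x-B*x) <= 2*a - B/2) by lra.
    assert ((a^2*B*(1-a*x))*(a*(1+a*x-B*x)) <= 4*(2*a - B/2)) by nra.
    assert (B*(a*x)^3 <= B) by nra. lra. }
  nra.
Qed.

Lemma Dd a B u v : g a B u - g a B v = (u-v)*(u^2+u*v+v^2 + a*(B-a)*(u+v) - B).
Proof. unfold g; ring. Qed.

Lemma root_loc a B r : 3 <= a -> 9*a <= B -> 0 < r -> g a B r = 0 ->
  (B*r < 3) \/ (a*r < 1 /\ a^2*B*(1-a*r) < 4).
Proof.
  intros Ha HB Hr Hg.
  destruct (Rlt_or_le (B*r) 3) as [h|h]; [left; exact h|right].
  destruct (Rlt_or_le (a*r) 1) as [h1|h1].
  2:{ pose proof (L1 a B r Ha HB h1). lra. }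
  split; [exact h1|].
  destruct (Rlt_or_le (2*a*r) 1) as [h2|h2].
  { pose proof (L2 a B r Ha Hr h ltac:(lra)). lra. }
  destruct (Rlt_or_le (a^2*B*(1-a*r)) 4) as [h3|h3]; [exact h3|].
  pose proof (L3 a B r Ha HB h2 h3). lra.
Qed.

Lemma core a B P th1 th2 : 3 <= a -> 1 <= P -> a^3*P <= B ->
  0 < th1 -> th1 < th2 -> g a B th1 = 0 -> g a B th2 = 0 ->
  th1 <= / P /\ Rabs (th2 - / a) <= / P.
Proof.
  intros Ha HP HB h1 h12 g1 g2.
  assert (Ha3 : 27 <= a^3) by (simpl; nra).
  assert (HB9 : 9*a <= B) by (simpl in *; nra).
  assert (HB27 : 27*P <= B) by nra.
  assert (HD : th1^2+th1*th2+th2^2 + a*(B-a)*(th1+th2) - B = 0).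
  { pose proof (Dd a B th1 th2) as E. rewrite g1, g2 in E.
    assert (th1 - th2 <> 0) by lra.
    apply (Rmult_eq_reg_l (th1 - th2)); lra. }
  assert (HaB : 0 < a*(B-a)) by nra.
  destruct (root_loc a B th1 Ha HB9 h1 g1) as [c1|[c1 c1']];
  destruct (root_loc a B th2 Ha HB9 ltac:(lra) g2) as [c2|[c2 c2']].
  -
    exfalso.
    assert (B*th1 < 3) by lra.
    assert (3*B*B + 0 <= B*B*B/9) by nra.
    assert (B*B*(th1^2+th1*th2+th2^2) < 27) by nra.
    assert (B*(a*(B-a)*(th1+th2)) < 6*a*(B-a)) by nra.
    nra.
  - assert (HiP : P * / P = 1) by (field; lra).
    assert (HiP0 : 0 < / P) by (apply Rinv_0_lt_compat; lra).
    assert (Hia : a * / a = 1) by (field; lra).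
    assert (Hia0 : 0 < / a) by (apply Rinv_0_lt_compat; lra).
    assert (Ha2B : 81 <= a^2*B) by (simpl in *; nra).
    split.
    + assert (th1 * P <= 1) by nra. nra.
    + set (d := 1 - a*th2) in *.
      assert (E : th2 - / a = - (d * / a)) by (unfold d; field; lra).
      rewrite E, Rabs_Ropp, Rabs_right by nra.
      assert (Hd0 : 0 <= d) by nra.
      assert (Hd : a^5*P*d <= a^2*B*d).
      { apply Rmult_le_compat_r; [lra|].
        replace (a^5*P) with (a^2*(a^3*P)) by ring.
        apply Rmult_le_compat_l; [apply pow_le; lra|lra]. }
      assert (Hd2 : P*d <= a).
      { assert (a^5 >= a) by (simpl in *; nra). nra. }
      nra.
  - exfalso.
    assert (Ha2B : 81 <= a^2*B) by (simpl in *; nra).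
    assert (3/4 <= a*th1) by nra.
    nra.
  - exfalso.
    assert (Ha2B : 81 <= a^2*B) by (simpl in *; nra).
    assert (3/4 <= a*th1) by nra.
    assert (3/4 <= a*th2) by nra.
    assert (a*(B-a)*th1 >= (B-a)*(3/4)) by nra.
    assert (a*(B-a)*th2 >= (B-a)*(3/4)) by nra.
    nra.
Qed.

Theorem mainTheorem3 :
  forall (alpha : R), 0 < alpha < / 4 ->
  forall (k : nat), (1 <= k)%nat -> INR k <= / alpha - 3 ->
  exists A' : R, 0 < A' /\
    forall (a : nat -> nat),
      (forall t : nat, (1 <= t)%nat -> (1 <= a t)%nat) ->
      (forall t : nat, (1 <= t)%nat -> INR (a t) <= Rpower (INR t) alpha) ->
      forall t : nat, (1 <= t)%nat -> A' <= INR (a t) ->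
      forall theta1 theta2 : R,
        0 < theta1 -> theta1 < theta2 ->
        f_poly (INR t) (INR (a t)) theta1 = 0 ->
        f_poly (INR t) (INR (a t)) theta2 = 0 ->
        Rabs theta1 <= / (INR (a t)) ^ k /\
        Rabs (theta2 - / INR (a t)) <= / (INR (a t)) ^ k.
Proof.
  intros alpha [Hal1 Hal2] k Hk Hka.
  exists 3. split; [lra|].
  intros a Ha1 Hpow t Ht HA th1 th2 h1 h12 f1 f2.
  set (x := INR (a t)) in *. set (T := INR t) in *.
  assert (HT : 1 <= T) by (unfold T; apply (le_INR 1); exact Ht).
  assert (Hx0 : 0 <= x) by lra.
  assert (Hkx : x ^ (k+3) <= T).
  { pose proof (Hpow t Ht) as Hp. fold x T in Hp.
    assert (Hr0 : 0 < Rpower T alpha) by (unfold Rpower; apply exp_pos).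
    apply Rle_trans with ((Rpower T alpha) ^ (k+3)).
    { apply pow_incr; lra. }
    rewrite <- Rpower_pow by exact Hr0. rewrite Rpower_mult.
    rewrite <- (Rpower_1 T) at 2 by lra.
    apply Rle_Rpower; [lra|].
    rewrite plus_INR. simpl (INR 3).
    assert (Hia : alpha * / alpha = 1) by (field; lra).
    assert (INR k + 3 <= / alpha) by lra.
    nra. }
  assert (HP : 1 <= x ^ k) by (apply pow_R1_Rle; lra).
  set (B := x^4 - x + T).
  assert (HB : x^3 * x^k <= B).
  { rewrite <- pow_add, Nat.add_comm. unfold B.
    assert (x <= x^4).
    { replace (x^4) with (x * x^3) by ring.
      assert (1 <= x^3) by (apply pow_R1_Rle; lra). nra. }
    lra. }
  assert (G : forall y, f_poly T x y = g x B y).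
  { intro y. unfold f_poly, g, B. ring. }
  rewrite G in f1, f2.
  destruct (core x B (x^k) th1 th2 HA HP HB h1 h12 f1 f2) as [c1 c2].
  split; [rewrite Rabs_right by lra|]; assumption.
Qed.
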